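(* Let $(X,\sigma_X)$ be a one-sided full shift, $\pi:X\to Y$ a one-block factor map, and $f\in C(X)$ of summable variation. Fix $w\in X$ and define, for $y\in Y$, $n\in\mathbb N$, $$g_n(y,w)=\sum_{b_n=x_1\cdots x_n\in B_n(X),\ \pi(x_1\cdots x_n)=y_1\cdots y_n}e^{f(b_nw)+\cdots+f(\sigma_X^{n-1}(b_nw))},\qquad u_{w,n}(y)=\frac{g_{n+1}(y,w)}{g_n(\sigma_Yy,w)},$$ where $b_nw$ is the concatenation. Let $u:Y\to\mathbb R$ be the continuous function which is the uniform limit of $u_{w,n}$ as $n\to\infty$ (this limit exists and is independent of $w$). Then, with $\bar g_n(y)=\sup_{E_n(y)}\sum_{x\in E_n(y)}e^{f(x)+\cdots+f(\sigma_X^{n-1}x)}$, for all $m\in M(Y,\sigma_Y)$, $$\lim_{n\to\infty}\tfrac1n\int\log\bar g_n\,dm=\int\log u\,dm.$$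
   Context: Full shift: $\{1,\dots,k\}^{\mathbb N}$ with the left shift; $B_n(X)$ words of length $n$. One-block factor map: continuous surjection commuting with shifts, $\pi(x)_i$ depending only on $x_i$ (acting letterwise on words). $f$ is of summable variation if $\sum_{n\ge1}\sup\{|f(x)-f(x')|:x_i=x'_i,1\le i\le n\}<\infty$. $E_n(y)$: any set with exactly one point from each cylinder $[x_1\cdots x_n]$ of $X$ with $\pi([x_1\cdots x_n])\subseteq[y_1\cdots y_n]$; the sup is over all such choices. $M(Y,\sigma_Y)$: invariant Borel probability measures on $Y$. *)

(* Defs.v *)
From HB Require Import structures.
From mathcomp Require Import all_boot all_order all_algebra.
From mathcomp Require Import all_classical all_reals all_analysis.
Set Implicit Arguments. Unset Strict Implicit. Unset Printing Implicit Defensive.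
Import Order.TTheory GRing.Theory Num.Theory.
Local Open Scope ring_scope.
Local Open Scope classical_set_scope.

(* Points of a one-sided sequence space over the alphabet 'I_a.+1
   (a finite nonempty alphabet {0,...,a}); coordinates are indexed from 0. *)
Definition seqsp (a : nat) := nat -> 'I_a.+1.
HB.instance Definition _ a := Choice.on (seqsp a).
HB.instance Definition _ a := isPointed.Build (seqsp a) (fun _ => ord0).

Definition word (a n : nat) := {ffun 'I_n -> 'I_a.+1}.

Definition shiftn (T : Type) (i : nat) (x : nat -> T) : nat -> T :=
  fun j => x (i + j)%N.

Definition concat (a n : nat) (b : word a n) (w : seqsp a) : seqsp a :=
  fun j => match (insub j : option 'I_n) with
           | Some i => b i
           | None => w (j - n)%N
           end.

Definition birk (R : realType) (a : nat) (f : seqsp a -> R) (n : nat)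
  (x : seqsp a) : R := \sum_(i < n) f (shiftn i x).

(* continuity of f on the full shift (product of discrete topologies):
   cylinders [x_0 ... x_(N-1)] form a neighbourhood base at x *)
Definition cont_shift (R : realType) (a : nat) (f : seqsp a -> R) : Prop :=
  forall (x : seqsp a) (e : R), 0 < e ->
    exists N : nat, forall x' : seqsp a,
      (forall i, (i < N)%N -> x' i = x i) -> `|f x' - f x| < e.

Definition var_n (R : realType) (a : nat) (f : seqsp a -> R) (n : nat)
  : \bar R :=
  ereal_sup [set e : \bar R | exists x x' : seqsp a,
     (forall i, (i < n)%N -> x i = x' i) /\ e = (`|f x - f x'|)%:E].

Definition summable_variation (R : realType) (a : nat) (f : seqsp a -> R)
  : Prop := (\sum_(1 <= n <oo) var_n f n < +oo)%E.

Definition pimap (k l : nat) (p : 'I_k.+1 -> 'I_l.+1) (x : seqsp k) : seqsp l :=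
  fun i => p (x i).

Definition Yset (k l : nat) (p : 'I_k.+1 -> 'I_l.+1) : set (seqsp l) :=
  [set y | exists x : seqsp k, y = pimap p x].

Definition over (k l n : nat) (p : 'I_k.+1 -> 'I_l.+1) (y : seqsp l)
  (b : word k n) : bool := [forall i : 'I_n, p (b i) == y (val i)].

Definition gfun (R : realType) (k l : nat) (p : 'I_k.+1 -> 'I_l.+1)
  (f : seqsp k -> R) (n : nat) (y : seqsp l) (w : seqsp k) : R :=
  \sum_(b : word k n | over p y b) expR (birk f n (concat b w)).

Definition ufun (R : realType) (k l : nat) (p : 'I_k.+1 -> 'I_l.+1)
  (f : seqsp k -> R) (w : seqsp k) (n : nat) (y : seqsp l) : R :=
  gfun p f n.+1 y w / gfun p f n (shiftn 1 y) w.

(* \bar g_n(y): sup over all choices E_n(y) of one point e b in each cylinder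
   [b] with pi(b) = y_0...y_(n-1), of sum_b exp(S_n f (e b)) *)
Definition gbar (R : realType) (k l : nat) (p : 'I_k.+1 -> 'I_l.+1)
  (f : seqsp k -> R) (n : nat) (y : seqsp l) : R :=
  sup [set s : R | exists e : word k n -> seqsp k,
     (forall b : word k n, over p y b -> forall i : 'I_n, e b (val i) = b i)
     /\ s = \sum_(b : word k n | over p y b) expR (birk f n (e b))].

Definition cylinders (l : nat) : set (set (seqsp l)) :=
  [set A | exists n (c : word l n), A = [set y | forall i : 'I_n, y (val i) = c i]].

(* measurable space: sigma-algebra generated by cylinders (= Borel sets) *)
Definition Yspace (l : nat) := g_sigma_algebraType (@cylinders l).

(* Main.v *)
Require Import Defs.
From HB Require Import structures.
From mathcomp Require Import all_boot all_order all_algebra.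
From mathcomp Require Import all_classical all_reals all_analysis.
From mathcomp Require Import measurable_realfun.
From mathcomp Require Import lra ring.
Set Implicit Arguments. Unset Strict Implicit. Unset Printing Implicit Defensive.
Import Order.TTheory GRing.Theory Num.Theory.
Local Open Scope ring_scope.
Local Open Scope classical_set_scope.

Definition agree (a N : nat) (x y : seqsp a) := forall i, (i < N)%N -> x i = y i.

Lemma concat_lt a n (b : word a n) w j (H : (j < n)%N) : concat b w j = b (Ordinal H).
Proof.
rewrite /concat; case: insubP => [i' _ /= Hi|]; last by rewrite H.
by congr (b _); apply: val_inj.
Qed.

Lemma concat_ge a n (b : word a n) w j : (n <= j)%N -> concat b w j = w (j - n)%N.
Proof. by move=> H; rewrite /concat insubN // -leqNgt. Qed.

Lemma dep_meas l N (S : set (Yspace l)) :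
  (forall y y', agree N y y' -> S y -> S y') -> measurable S.
Proof.
move=> HS.
have -> : S = \big[setU/set0]_(c : word l N | `[< S (concat c (fun _ => ord0)) >])
     [set y : Yspace l | forall i : 'I_N, y (val i) = c i].
  apply/seteqP; split => y.
  - move=> Sy; rewrite -bigcup_seq_cond /=.
    exists [ffun i : 'I_N => y (val i)].
      rewrite /= mem_index_enum /=; apply/asboolP; apply: HS Sy => i iN; by rewrite concat_lt ffunE.
    by move=> i /=; rewrite ffunE.
  - rewrite -bigcup_seq_cond => -[c /andP[_ /asboolP Sc]] /= yc.
    apply: HS Sc => i iN; by rewrite concat_lt -(yc (Ordinal iN)).
apply: bigsetU_measurable => c _; apply: sub_sigma_algebra.
by exists N, c.
Qed.

Lemma dep_meas_fun l N (R : realType) (D : set (Yspace l)) (h : Yspace l -> R) :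
  measurable D -> (forall y y', agree N y y' -> h y = h y') -> measurable_fun D h.
Proof.
move=> mD Hh _ B mB; apply: measurableI => //.
by apply: (@dep_meas l N) => y y' a /=; rewrite (Hh _ _ a).
Qed.

Lemma Yset_meas k l (p : 'I_k.+1 -> 'I_l.+1) : measurable (Yset p : set (Yspace l)).
Proof.
have -> : (Yset p : set (Yspace l)) = \bigcap_i [set y : Yspace l | exists a, y i = p a].
  apply/seteqP; split.
  - by move=> y [x ->] i _ /=; exists (x i).
  - move=> y Hy; exists (fun i => odflt ord0 [pick a | p a == y i]).
    apply/funext => i; rewrite /pimap; case: pickP => [a /eqP -> //|H].
    have [a Ha] := Hy i I; by move: (H a); rewrite Ha eqxx.
apply: bigcapT_measurable => i; apply: (@dep_meas l i.+1) => y y' a [b Hb].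
by exists b; rewrite -a.
Qed.

Lemma shiftn0 T (y : nat -> T) : shiftn 0 y = y.
Proof. by apply/funext => j; rewrite /shiftn add0n. Qed.

Lemma shiftnS T i (y : nat -> T) : shiftn i.+1 y = shiftn i (shiftn 1 y).
Proof. by apply/funext => j; rewrite /shiftn add1n addSn. Qed.

Lemma shiftnS' T i (y : nat -> T) : shiftn i.+1 y = shiftn 1 (shiftn i y).
Proof. by apply/funext => j; rewrite /shiftn addnA addn1. Qed.

Lemma shift_meas l i : measurable_fun setT (shiftn i : Yspace l -> Yspace l).
Proof.
have := @measurability _ _ (Yspace l) (Yspace l) setT (shiftn i) (@cylinders l).
apply; first by [].
move=> _ [A [N [c ->]] <-]; apply: (@dep_meas l (i + N)) => y y' a /= [_ H].
split => // j; rewrite /shiftn -a ?ltn_add2l //; exact: H.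
Qed.

Lemma sum_rev_nat (V : nmodType) (F : nat -> V) n :
  \sum_(i < n) F (n - i)%N = \sum_(1 <= j < n.+1) F j.
Proof.
elim: n => [|n IH]; first by rewrite big_ord0 big_geq.
rewrite big_ord_recl big_nat_recr //= -IH subn0 addrC; congr (_ + _).
Qed.

Lemma agree_shift a n i (x x' : seqsp a) : agree n x x' ->
  agree (n - i) (shiftn i x) (shiftn i x').
Proof. by move=> H t Ht; rewrite /shiftn H // -ltn_subRL. Qed.

Section FVar.
Variables (R : realType) (k : nat) (f : seqsp k -> R).
Hypothesis Hsv : summable_variation f.
Local Open Scope ereal_scope.

Lemma var_ge (j : nat) (x x' : seqsp k) : agree j x x' ->
  (`|f x - f x'|)%:E <= var_n f j.
Proof. by move=> H; apply: ereal_sup_ubound; exists x, x'. Qed.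

Lemma var_ge0 j : 0 <= var_n f j.
Proof.
apply: le_trans (var_ge (x:=point) (x':=point) _) => //; by rewrite subrr normr0.
Qed.

Definition VE := \sum_(1 <= n <oo) var_n f n.

Lemma VE_ge0 : 0 <= VE.
Proof. apply: nneseries_ge0 => n _ _; exact: var_ge0. Qed.

Definition Vr : R := fine VE.

Lemma VrE : VE = Vr%:E.
Proof. by rewrite /Vr fineK // ge0_fin_numE ?VE_ge0. Qed.

Lemma Vr_ge0 : (0 <= Vr)%R.
Proof. by rewrite -lee_fin -VrE VE_ge0. Qed.

Lemma birk_var n (x x' : seqsp k) : agree n x x' ->
  (`|birk f n x - birk f n x'| <= Vr)%R.
Proof.
move=> H; rewrite /birk -sumrB.
apply: le_trans (ler_norm_sum _ _ _) _.
rewrite -lee_fin -VrE -sumEFin.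
apply: le_trans (_ : \sum_(i < n) var_n f (n - i)%N <= _).
  apply: lee_sum => i _; apply: var_ge; exact: agree_shift.
rewrite sum_rev_nat; apply: nneseries_lim_ge => j _ _; exact: var_ge0.
Qed.

End FVar.

Lemma birk1 (R : realType) a (f : seqsp a -> R) x : birk f 1 x = f x.
Proof. by rewrite /birk big_ord1 shiftn0. Qed.

Lemma birk_bound (R : realType) a (f : seqsp a -> R) M n x :
  (forall z, `|f z| <= M) -> `|birk f n x| <= n%:R * M.
Proof.
move=> HM; apply: le_trans (ler_norm_sum _ _ _) _.
apply: le_trans (_ : \sum_(i < n) M <= _); first by apply: ler_sum => i _.
by rewrite sumr_const card_ord mulr_natl.
Qed.

Lemma Yshift k l (p : 'I_k.+1 -> 'I_l.+1) i y : Yset p y -> Yset p (shiftn i y).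
Proof. by move=> [x ->]; exists (shiftn i x). Qed.

Lemma sum_single (R : realType) (I : finType) (P : pred I) (F : I -> R) b :
  P b -> (forall b, P b -> 0 <= F b) -> F b <= \sum_(b | P b) F b.
Proof.
move=> Pb H; rewrite (bigD1 b) //= lerDl; apply: sumr_ge0 => i /andP[Pi _]; exact: H.
Qed.

Lemma ln_lip (R : realType) (d a b : R) : 0 < d -> d <= a -> d <= b ->
  `|ln a - ln b| <= `|a - b| / d.
Proof.
move=> d0 da db.
have a0 : 0 < a by apply: lt_le_trans da.
have b0 : 0 < b by apply: lt_le_trans db.
have key x y : 0 < x -> d <= y -> ln x - ln y <= `|x - y| / d.
  move=> x0 dy; have y0 : 0 < y by apply: lt_le_trans dy.
  rewrite -lnV ?posrE // -lnM ?posrE ?invr_gt0 //.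
  have H : ln (x / y) <= x / y - 1.
    have := @le_ln1Dx R (x / y - 1); rewrite addrCA subrr addr0; apply.
    by rewrite ltrBrDl subrr divr_gt0.
  apply: le_trans H _.
  have -> : x / y - 1 = (x - y) / y by rewrite mulrBl divff // gt_eqF.
  apply: le_trans (_ : `|x - y| / y <= _).
    by apply: ler_wpM2r; [rewrite invr_ge0 ltW|exact: ler_norm].
  by apply: ler_wpM2l => //; rewrite lef_pV2 ?posrE.
rewrite ler_norml; apply/andP; split; last exact: key.
by rewrite lerNl opprB distrC; exact: key.
Qed.


Section Main.
Variables (R : realType) (k l : nat) (p : 'I_k.+1 -> 'I_l.+1)
  (f : seqsp k -> R) (w : seqsp k).
Hypothesis Hsv : summable_variation f.

Definition Mf : R := \sum_(a : 'I_k.+1) `|f (fun _ => a)| + Vr f.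

Lemma Mf_ge0 : 0 <= Mf.
Proof. apply: addr_ge0; last exact: Vr_ge0.
by apply: sumr_ge0 => a _.
Qed.

Lemma f_bound x : `|f x| <= Mf.
Proof.
have -> : f x = f (fun _ => x 0%N) + (f x - f (fun _ => x 0%N)) by rewrite addrC subrK.
apply: le_trans (ler_normD _ _) _; apply: lerD.
  by apply: (@sum_single R _ xpredT (fun a => `|f (fun _ => a)|)).
rewrite -(birk1 f x) -(birk1 f (fun=> _)); apply: birk_var => // i; by case: i.
Qed.

Definition gg n y := gfun p f n y w.
Definition Bn n : R := n%:R * Mf + ln (#|{: word k n}|%:R).

Lemma card_word_ge1 n : (1 <= #|{: word k n}|)%N.
Proof. by apply/card_gt0P; exists [ffun => ord0]. Qed.

Lemma Bn_ge0 n : 0 <= Bn n.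
Proof.
apply: addr_ge0; first by apply: mulr_ge0 => //; exact: Mf_ge0.
by rewrite ln_ge0 // ler1n; exact: card_word_ge1.
Qed.

Lemma over_ex n y : Yset p y -> exists b : word k n, Defs.over p y b.
Proof.
move=> [x ->]; exists [ffun i => x (val i)]; apply/forallP => i; by rewrite ffunE.
Qed.

Lemma gg_ge n y : Yset p y -> expR (- (n%:R * Mf)) <= gg n y.
Proof.
move=> Yy; have [b Hb] := over_ex n Yy.
rewrite /gg /gfun.
have := (@sum_single R _ (Defs.over p y) (fun b => expR (birk f n (concat b w))) b Hb).
move=> /(_ (fun _ _ => ltW (expR_gt0 _))) H.
refine (le_trans _ H).
rewrite ler_expR lerNl; apply: le_trans (ler_norm _) _.
rewrite normrN; apply: birk_bound; exact: f_bound.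
Qed.

Lemma gg_gt0 n y : Yset p y -> 0 < gg n y.
Proof. by move=> Yy; apply: lt_le_trans (gg_ge n Yy); exact: expR_gt0. Qed.

Lemma gg_le n y : gg n y <= #|{: word k n}|%:R * expR (n%:R * Mf).
Proof.
rewrite /gg /gfun big_mkcond /=.
apply: le_trans (_ : \sum_(b : word k n) expR (n%:R * Mf) <= _); last first.
  by rewrite sumr_const [X in _ <= X]mulrC mulr_natr.
apply: ler_sum => b _; case: ifP => _; last exact: ltW (expR_gt0 _).
rewrite ler_expR; apply: le_trans (ler_norm _) _; apply: birk_bound; exact: f_bound.
Qed.

Lemma ln_gg_bound n y : Yset p y -> `|ln (gg n y)| <= Bn n.
Proof.
move=> Yy; have g0 := gg_gt0 n Yy.
have c0 : (0 : R) < #|{: word k n}|%:R by rewrite ltr0n; exact: card_word_ge1.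
have lc0 : 0 <= ln (#|{: word k n}|%:R : R) by rewrite ln_ge0 // ler1n card_word_ge1.
rewrite ler_norml; apply/andP; split.
  have H : - (n%:R * Mf) <= ln (gg n y).
    by rewrite -[X in X <= _]expRK ler_ln ?posrE ?expR_gt0 //; exact: gg_ge.
  apply: le_trans H; rewrite /Bn opprD lerBlDr lerDl //.
apply: le_trans (_ : ln (#|{: word k n}|%:R * expR (n%:R * Mf)) <= _).
  by rewrite ler_ln ?posrE ?mulr_gt0 ?expR_gt0 //; exact: gg_le.
by rewrite lnM ?posrE ?expR_gt0 // expRK addrC.
Qed.

Lemma gg0 y : gg 0 y = 1.
Proof.
rewrite /gg /gfun (eq_bigl xpredT); last by move=> b; apply/forallP => -[].
under eq_bigr do rewrite /birk big_ord0 expR0.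
by rewrite sumr_const card_ffun !card_ord expn0.
Qed.

End Main.

Section M2.
Variables (R : realType) (k l : nat) (p : 'I_k.+1 -> 'I_l.+1)
  (f : seqsp k -> R) (w : seqsp k).
Hypothesis Hsv : summable_variation f.

Local Notation g := (gg p f w).

Lemma gbar_bounds n y : Yset p y ->
  g n y <= gbar p f n y /\ gbar p f n y <= expR (Vr f) * g n y.
Proof.
move=> Yy; rewrite /gbar.
set S := [set s : R | _].
have Sg : S (g n y).
  exists (fun b => concat b w); split => // b _ i.
  by rewrite (concat_lt _ _ (ltn_ord i)); congr (b _); apply: val_inj.
have ub : forall s, S s -> s <= expR (Vr f) * g n y.
  move=> s [e [He ->]]; rewrite /gg /gfun mulr_sumr; apply: ler_sum => b Hb.
  rewrite -expRD ler_expR -lerBlDr.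
  apply: le_trans (ler_norm _) _; apply: birk_var => // i Hi.
  by rewrite (concat_lt _ _ Hi) -(He b Hb (Ordinal Hi)).
split; first by apply: ub_le_sup => //; exists (expR (Vr f) * g n y).
by apply: ge_sup => //; exists (g n y).
Qed.

Lemma ln_gbar n y : Yset p y -> `|ln (gbar p f n y) - ln (g n y)| <= Vr f.
Proof.
move=> Yy; have [H1 H2] := gbar_bounds n Yy.
have g0 := gg_gt0 w Hsv n Yy.
have gb0 : 0 < gbar p f n y by apply: lt_le_trans H1.
rewrite ger0_norm; last by rewrite subr_ge0 ler_ln ?posrE.
rewrite lerBlDr -[X in _ <= X + _]expRK -lnM ?posrE ?expR_gt0 //.
by rewrite ler_ln ?posrE ?mulr_gt0 ?expR_gt0.
Qed.

Definition aa j y := ln (ufun p f w j y).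

Lemma aaE j y : Yset p y -> aa j y = ln (g j.+1 y) - ln (g j (shiftn 1 y)).
Proof.
move=> Yy; have g1 := gg_gt0 w Hsv j.+1 Yy.
have g2 := gg_gt0 w Hsv j (Yshift 1 Yy).
rewrite /aa /ufun lnM ?posrE ?invr_gt0 //.
by rewrite lnV ?posrE.
Qed.

Lemma telescope_gg n y : Yset p y ->
  ln (g n y) = \sum_(i < n) aa (n - i.+1) (shiftn i y).
Proof.
move=> Yy.
pose H i := ln (g (n - i) (shiftn i y)).
have E : forall i : 'I_n, aa (n - i.+1) (shiftn i y) = H i - H i.+1.
  move=> i; rewrite aaE; last exact: Yshift.
by rewrite (subnSK (ltn_ord i)) /H (shiftnS' i y).
under eq_bigr do rewrite E.
rewrite -(big_mkord xpredT (fun i => H i - H i.+1)).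
have -> : \sum_(0 <= i < n) (H i - H i.+1) = - \sum_(0 <= i < n) (H i.+1 - H i).
  by rewrite -sumrN; apply: eq_bigr => i _; rewrite opprB.
rewrite telescope_sumr // opprB /H subnn gg0 ln1 subn0 shiftn0 subr0 //.
Qed.

End M2.

Definition scons a (a0 : 'I_a.+1) (s : seqsp a) : seqsp a :=
  fun t => match t with 0 => a0 | t'.+1 => s t' end.

Definition cons_w a j (w : seqsp a) (a0 : 'I_a.+1) (b : word a j) : word a j.+1 :=
  [ffun i : 'I_j.+1 => scons a0 (concat b w) (val i)].

Lemma concat_cons a j w a0 (b : word a j) : concat (cons_w w a0 b) w = scons a0 (concat b w).
Proof.
apply/funext => t; case: (ltnP t j.+1) => Ht.
  by rewrite (concat_lt _ _ Ht) ffunE.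
rewrite concat_ge //; case: t Ht => // t Ht /=.
by rewrite concat_ge // subSS.
Qed.

Lemma shift1_scons a (a0 : 'I_a.+1) s : shiftn 1 (scons a0 s) = s.
Proof. by apply/funext => t; rewrite /shiftn add1n. Qed.

Lemma birk_scons (R : realType) a (f : seqsp a -> R) j a0 s :
  birk f j.+1 (scons a0 s) = f (scons a0 s) + birk f j s.
Proof.
rewrite /birk big_ord_recl shiftn0; congr (_ + _); apply: eq_bigr => i _.
Qed.

Lemma cons_w_inj a j w a0 : injective (@cons_w a j w a0).
Proof.
move=> b1 b2 H; apply/ffunP => i.
have Hi : (i.+1 < j.+1)%N := ltn_ord i.
have := congr1 (fun c : word a j.+1 => c (Ordinal Hi)) H; rewrite !ffunE /=.
rewrite !(concat_lt _ _ (ltn_ord i)).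
by have -> : Ordinal (ltn_ord i) = i by apply: val_inj.
Qed.

Lemma over_cons k l (p : 'I_k.+1 -> 'I_l.+1) j w a0 y (b : word k j) :
  Defs.over p (shiftn 1 y) b -> p a0 = y 0%N -> Defs.over p y (cons_w w a0 b).
Proof.
move=> /forallP Hb Ha; apply/forallP => -[[|t] Ht]; rewrite ffunE /=.
  by rewrite Ha.
have Ht' : (t < j)%N := Ht.
rewrite /scons (concat_lt _ _ Ht'); have := Hb (Ordinal Ht'); by rewrite /shiftn add1n.
Qed.

Section M3.
Variables (R : realType) (k l : nat) (p : 'I_k.+1 -> 'I_l.+1)
  (f : seqsp k -> R) (w : seqsp k).
Hypothesis Hsv : summable_variation f.

Local Notation g := (gg p f w).

Lemma gg_step j y : Yset p y -> expR (- Mf f) * g j (shiftn 1 y) <= g j.+1 y.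
Proof.
move=> Yy; have [x Hx] := Yy.
have Ha : p (x 0%N) = y 0%N by rewrite Hx.
pose F (b' : word k j.+1) := expR (birk f j.+1 (concat b' w)).
pose A : {set word k j} := [set b | Defs.over p (shiftn 1 y) b]%SET.
have S1 : \sum_(b | Defs.over p (shiftn 1 y) b) F (cons_w w (x 0%N) b)
    <= g j.+1 y.
  rewrite (eq_bigl (mem A)); last by move=> b /=; rewrite /A inE.
  rewrite -big_imset /=; last by move=> b1 b2 _ _; exact: cons_w_inj.
  rewrite /gg /gfun [X in _ <= X]big_mkcond [X in X <= _]big_mkcond /=.
  apply: ler_sum => b' _; case: ifPn => Hb'.
    have /imsetP [b Hb ->] := Hb'.
    rewrite over_cons //; by move: Hb; rewrite /A inE.
  by case: ifP => _ //.
apply: le_trans S1; rewrite /gg /gfun mulr_sumr; apply: ler_sum => b _.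
rewrite /F concat_cons birk_scons expRD ler_wpM2r ?ler_expR //.
by rewrite lerNl; apply: le_trans (ler_norm _) _; rewrite normrN; exact: f_bound.
Qed.

Lemma ufun_ge j y : Yset p y -> expR (- Mf f) <= ufun p f w j y.
Proof.
move=> Yy; rewrite /ufun ler_pdivlMr; last exact: gg_gt0 (Yshift 1 Yy).
exact: gg_step.
Qed.

End M3.

Lemma sum_if_lt (R : realType) (K : R) N n : 0 <= K ->
  \sum_(i < n) (if (i < N)%N then K else 0) <= N%:R * K.
Proof.
move=> K0.
have -> : \sum_(i < n) (if (i < N)%N then K else 0) = (minn n N)%:R * K.
  elim: n => [|n IH]; first by rewrite big_ord0 min0n mul0r.
  rewrite big_ord_recr /= IH; case: (ltnP n N) => H.
    rewrite (minn_idPl H).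
    by rewrite -natr1 mulrDl mul1r.
  by rewrite (minn_idPr (leqW H)) addr0.
by apply: ler_wpM2r => //; rewrite ler_nat geq_minr.
Qed.

Section M4.
Variables (R : realType) (k l : nat) (p : 'I_k.+1 -> 'I_l.+1)
  (f : seqsp k -> R) (w : seqsp k) (u : seqsp l -> R).
Hypothesis Hsv : summable_variation f.
Hypothesis Hu : forall e : R, 0 < e -> exists N : nat, forall n : nat, (N <= n)%N ->
     forall y : seqsp l, Yset p y -> `|ufun p f w n y - u y| < e.

Local Notation g := (gg p f w).
Local Notation a := (aa p f w).

Lemma aa_conv e : 0 < e -> exists N, forall j, (N <= j)%N -> forall y, Yset p y ->
  0 < u y /\ `|a j y - ln (u y)| <= e.
Proof.
move=> e0; set c := expR (- Mf f).
have c0 : 0 < c by exact: expR_gt0.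
set d := Num.min (c / 2) (e * c / 2).
have d0 : 0 < d by rewrite lt_min !divr_gt0 ?mulr_gt0.
have d1 : d <= c / 2 by rewrite ge_min lexx.
have d2 : d <= e * c / 2 by rewrite ge_min lexx orbT.
have [N HN] := Hu d0; exists N => j Hj y Yy.
have := HN j Hj y Yy => Hd.
have uf := ufun_ge w Hsv j Yy; rewrite -/c in uf.
have Hu2 : c / 2 <= u y.
  have := ltW Hd; rewrite ler_norml => /andP[_ H2]; lra.
split; first by apply: lt_le_trans Hu2; rewrite divr_gt0.
have c2 : 0 < c / 2 by rewrite divr_gt0.
apply: le_trans (ln_lip c2 _ Hu2) _; first lra.
rewrite ler_pdivrMr //; have := ltW Hd; lra.
Qed.


Lemma aa_bound j y : Yset p y -> `|a j y| <= Bn f j.+1 + Bn f j.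
Proof.
move=> Yy; rewrite aaE //; apply: le_trans (ler_normB _ _) _.
apply: lerD; first exact: ln_gg_bound.
exact: ln_gg_bound (Yshift 1 Yy).
Qed.

Lemma lnu_bound : exists Lb, 0 <= Lb /\ forall y, Yset p y -> `|ln (u y)| <= Lb.
Proof.
have [N1 HN1] := aa_conv ltr01.
exists (Bn f N1.+1 + Bn f N1 + 1); split.
  by apply: addr_ge0; [apply: addr_ge0; exact: Bn_ge0|].
move=> y Yy; have [_ H] := HN1 N1 (leqnn _) y Yy.
have -> : ln (u y) = a N1 y - (a N1 y - ln (u y)) by rewrite opprB addrC subrK.
apply: le_trans (ler_normB _ _) _; apply: lerD => //; exact: aa_bound.
Qed.

Lemma K_bound : exists K, 0 <= K /\ forall j y, Yset p y -> `|a j y - ln (u y)| <= K.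
Proof.
have [N1 HN1] := aa_conv ltr01.
have [Lb [Lb0 HLb]] := lnu_bound.
have T0 : forall j : nat, 0 <= Bn f j.+1 + Bn f j + Lb.
  by move=> j; apply: addr_ge0 => //; apply: addr_ge0; exact: Bn_ge0.
exists (\sum_(j < N1) (Bn f j.+1 + Bn f j + Lb) + 1); split.
  by apply: addr_ge0 => //; apply: sumr_ge0 => j _.
move=> j y Yy; case: (ltnP j N1) => Hj.
  apply: le_trans (_ : Bn f j.+1 + Bn f j + Lb <= _).
    apply: le_trans (ler_normB _ _) _; apply: lerD; [exact: aa_bound|exact: HLb].
  have := @sum_single R _ xpredT (fun j : 'I_N1 => Bn f j.+1 + Bn f j + Lb) (Ordinal Hj) isT.
  move=> /(_ (fun i _ => T0 i)) H; apply: le_trans H _.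
  by rewrite lerDl ler01.
have [_ H] := HN1 j Hj y Yy; apply: le_trans H _.
by rewrite lerDr; apply: sumr_ge0 => i _.
Qed.


Lemma pointwise K e : 0 <= K -> (forall j y, Yset p y -> `|a j y - ln (u y)| <= K) ->
  0 < e -> exists N : nat, forall n y, Yset p y ->
  `|ln (gbar p f n y) - \sum_(i < n) ln (u (shiftn i y))| <=
     Vr f + N%:R * K + n%:R * e.
Proof.
move=> K0 HK e0; have [N HN] := aa_conv e0; exists N => n y Yy.
have -> : ln (gbar p f n y) - \sum_(i < n) ln (u (shiftn i y)) =
   (ln (gbar p f n y) - ln (g n y)) + (ln (g n y) - \sum_(i < n) ln (u (shiftn i y))).
  by rewrite addrA subrK.
apply: le_trans (ler_normD _ _) _; rewrite -addrA; apply: lerD.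
  exact: ln_gbar.
rewrite (telescope_gg w Hsv n Yy) -sumrB.
apply: le_trans (ler_norm_sum _ _ _) _.
apply: le_trans (_ : \sum_(i < n) (e + (if (n - i.+1 < N)%N then K else 0)) <= _).
  apply: ler_sum => i _; case: ltnP => Hi.
    apply: le_trans (HK _ _ (Yshift i Yy)) _; rewrite lerDr; exact: ltW.
  have [_ H] := HN _ Hi _ (Yshift i Yy); by rewrite addr0.
rewrite big_split /= sumr_const card_ord addrC; apply: lerD.
have -> : \sum_(i < n) (if (n - i.+1 < N)%N then K else 0) =
          \sum_(i < n) (if (i < N)%N then K else 0) by rewrite [RHS](reindex_inj rev_ord_inj).
  exact: sum_if_lt.
by rewrite mulr_natl.
Qed.

End M4.

Lemma over_agree k l (p : 'I_k.+1 -> 'I_l.+1) n (y y' : seqsp l) :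
  agree n y y' -> Defs.over p y =1 Defs.over p y' :> (word k n -> bool).
Proof.
move=> H b; apply: eq_forallb => i; by rewrite (H _ (ltn_ord i)).
Qed.

Lemma gbar_dep (R : realType) k l (p : 'I_k.+1 -> 'I_l.+1) (f : seqsp k -> R) n y y' :
  agree n y y' -> gbar p f n y = gbar p f n y'.
Proof.
move=> H; rewrite /gbar.
have -> : Defs.over p y = Defs.over p y' :> (word k n -> bool).
  by apply/funext => b; exact: over_agree.
by [].
Qed.

Lemma gfun_dep (R : realType) k l (p : 'I_k.+1 -> 'I_l.+1) (f : seqsp k -> R) w n y y' :
  agree n y y' -> gfun p f n y w = gfun p f n y' w.
Proof. by move=> H; rewrite /gfun; apply: eq_bigl; exact: over_agree. Qed.

Lemma aa_dep (R : realType) k l (p : 'I_k.+1 -> 'I_l.+1) (f : seqsp k -> R) w j y y' :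
  agree j.+1 y y' -> aa p f w j y = aa p f w j y'.
Proof.
move=> H; rewrite /aa /ufun (gfun_dep _ _ _ H) (@gfun_dep _ _ _ _ _ _ j (shiftn 1 y) (shiftn 1 y')) //.
by move=> i Hi; rewrite /shiftn H.
Qed.

Section M5.
Variables (R : realType) (l : nat) (m : probability (Yspace l) R).
Hypothesis Hinv : forall A : set (Yspace l), measurable A -> m (shiftn 1 @^-1` A) = m A.

Lemma inv_i i (A : set (Yspace l)) : measurable A -> m (shiftn i @^-1` A) = m A.
Proof.
elim: i A => [|i IH] A mA.
  by congr (m _); apply/seteqP; split => y; rewrite /= shiftn0.
have -> : shiftn i.+1 @^-1` A = shiftn 1 @^-1` (shiftn i @^-1` A).
  by apply/seteqP; split => y; rewrite /= shiftnS.
rewrite Hinv ?IH //.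
by rewrite -[X in measurable X]setTI; apply: shift_meas.
Qed.

Lemma bint (D : set (Yspace l)) (h : Yspace l -> R) M : measurable D ->
  measurable_fun D h -> (forall x, D x -> `|h x| <= M) -> m.-integrable D (EFin \o h).
Proof.
move=> mD mh hM; apply: (@le_integrable _ _ _ _ _ mD _ (EFin \o cst M)).
- exact/measurable_EFinP.
- move=> x Dx /=; rewrite lee_fin; apply: le_trans (hM x Dx) _; exact: ler_norm.
- exact: finite_measure_integrable_cst.
Qed.

Lemma int_shift i (h : Yspace l -> R) M : measurable_fun setT h ->
  (forall x, `|h x| <= M) ->
  (\int[m]_(x in setT) (h (shiftn i x))%:E = \int[m]_(x in setT) (h x)%:E)%E.
Proof.
move=> mh hM.
have mhs : measurable_fun setT (h \o (shiftn i : Yspace l -> Yspace l)).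
  by apply: measurableT_comp => //; exact: shift_meas.
have := @integral_pushforward _ _ _ _ _ _ (@shift_meas l i) m setT (EFin \o h) _ _ measurableT.
rewrite preimage_setT => <- //.
- apply: (@eq_measure_integral _ _ _ setT m); first exact: shift_meas.
  by move=> H A mA _; exact: (inv_i i mA).
- exact/measurable_EFinP.
- by apply: (@bint _ _ M) => // x _.
Qed.


Lemma int_YT (Y : set (Yspace l)) (h : Yspace l -> R) M : measurable Y ->
  m Y = 1%E -> measurable_fun setT h -> (forall x, `|h x| <= M) ->
  (\int[m]_(x in Y) (h x)%:E = \int[m]_(x in setT) (h x)%:E)%E.
Proof.
move=> mY HY mh hM.
have mC : m (~` Y) = 0%E.
  by rewrite probability_setC // HY -EFinB subrr.
rewrite (@negligible_integral _ _ _ m setT (~` Y)) //.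
- by rewrite setTD setCK.
- exact: measurableC.
- by apply: (@bint _ _ M) => // x _.
Qed.

End M5.

Section M6.
Variables (R : realType) (k l : nat) (p : 'I_k.+1 -> 'I_l.+1)
  (f : seqsp k -> R) (w : seqsp k) (u : seqsp l -> R)
  (m : probability (Yspace l) R).
Hypothesis Hsv : summable_variation f.
Hypothesis Hu : forall e : R, 0 < e -> exists N : nat, forall n : nat, (N <= n)%N ->
     forall y : seqsp l, Yset p y -> `|ufun p f w n y - u y| < e.
Hypothesis HY : m (Yset p : set (Yspace l)) = 1%E.
Hypothesis Hinv : forall A : set (Yspace l), measurable A ->
     m (shiftn 1 @^-1` A) = m A.

Let Y := (Yset p : set (Yspace l)).
Let mY : measurable Y := Yset_meas p.
Definition Lp := (fun y : Yspace l => (ln (u y) : lebesgue_stieltjes_measure.Real_sort__canonical__measurable_structure_SigmaRing R)) \_ Y.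

Lemma Lp_meas : measurable_fun setT Lp.
Proof.
apply/(measurable_restrict _ mY measurableT); rewrite setTI.
apply: (@measurable_fun_cvg _ (Yspace l) R Y (fun j (y : Yspace l) => aa p f w j y)).
  move=> j; apply: (@dep_meas_fun _ j.+1) => // y y' H; exact: aa_dep.
move=> y Yy; apply/cvgrPdist_le => e e0.
have [N HN] := aa_conv Hsv Hu e0.
exists N => // t /= Ht; rewrite distrC; have [_ H] := HN t Ht y Yy; exact: H.
Qed.

Lemma Lp_bound : exists Lb, 0 <= Lb /\ forall y, `|Lp y| <= Lb.
Proof.
have [Lb [Lb0 HLb]] := lnu_bound Hsv Hu; exists Lb; split => // y.
rewrite /Lp /patch; case: ifPn => [/set_mem Yy|_]; first exact: HLb.
by change (`|0%R : R| <= Lb); rewrite normr0.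
Qed.


Lemma lnu_meas : measurable_fun Y (fun y => ln (u y)).
Proof.
have := Lp_meas; move/(measurable_restrict _ mY measurableT); by rewrite setTI.
Qed.

Lemma Lp_Y y : Y y -> Lp y = ln (u y).
Proof. by move=> Yy; rewrite /Lp patchT //; exact/mem_set. Qed.

Lemma int_Lp_shift i :
  (\int[m]_(y in Y) (Lp (shiftn i y))%:E = \int[m]_(y in Y) (ln (u y))%:E)%E.
Proof.
have [Lb [Lb0 HLb]] := Lp_bound.
have mLs : measurable_fun setT (Lp \o (shiftn i : Yspace l -> Yspace l)).
  by apply: measurableT_comp; [exact: Lp_meas|exact: shift_meas].
rewrite (@int_YT _ _ m Y (fun y => Lp (shiftn i y)) Lb mY HY mLs) //.
rewrite (@int_shift _ _ m Hinv i Lp Lb Lp_meas HLb).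
rewrite -(@int_YT _ _ m Y Lp Lb mY HY Lp_meas HLb).
by apply: eq_integral => y /set_mem Yy; rewrite Lp_Y.
Qed.

Definition Jr := fine (\int[m]_(y in Y) (ln (u y))%:E)%E.

Lemma JE : (\int[m]_(y in Y) (ln (u y))%:E)%E = Jr%:E.
Proof.
rewrite /Jr fineK //; apply: (integrable_fin_num mY).
have [Lb [Lb0 HLb]] := lnu_bound Hsv Hu.
exact: (@bint _ _ m Y _ Lb mY lnu_meas HLb).
Qed.


Definition Sn n (y : Yspace l) : R := \sum_(i < n) Lp (shiftn i y).

Lemma Sn_meas n : measurable_fun setT (Sn n).
Proof.
rewrite /Sn; apply: (@measurable_sum _ (Yspace l) R setT _ (index_enum 'I_n) (fun (i : 'I_n) y => Lp (shiftn i y))) => i.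
exact: (measurableT_comp Lp_meas (@shift_meas l i)).
Qed.

Lemma Sn_bound n : exists M, forall y, `|Sn n y| <= M.
Proof.
have [Lb [Lb0 HLb]] := Lp_bound; exists (n%:R * Lb) => y.
apply: le_trans (ler_norm_sum _ _ _) _.
apply: le_trans (_ : \sum_(i < n) Lb <= _); first by apply: ler_sum => i _.
by rewrite sumr_const card_ord mulr_natl.
Qed.

Lemma int_Sn n : (\int[m]_(y in Y) (Sn n y)%:E)%E = (n%:R * Jr)%:E.
Proof.
have [Lb [Lb0 HLb]] := Lp_bound.
rewrite /Sn; under eq_integral do rewrite -sumEFin.
rewrite integral_sum //; last first.
  move=> i; apply: (@bint _ _ m Y _ Lb mY) => //.
  apply: measurable_funTS; exact: (measurableT_comp Lp_meas (@shift_meas l i)).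
under eq_bigr do rewrite int_Lp_shift JE.
by rewrite sumEFin sumr_const card_ord mulr_natl.
Qed.


Lemma G_meas n : measurable_fun Y (fun y => ln (gbar p f n y)).
Proof. apply: (@dep_meas_fun _ n) => // y y' H; by rewrite (gbar_dep _ _ H). Qed.

Lemma G_bound n y : Y y -> `|ln (gbar p f n y)| <= Bn f n + Vr f.
Proof.
move=> Yy.
have -> : ln (gbar p f n y) = ln (gg p f w n y) + (ln (gbar p f n y) - ln (gg p f w n y)).
  by rewrite addrC subrK.
apply: le_trans (ler_normD _ _) _; apply: lerD.
  exact: ln_gg_bound.
exact: ln_gbar.
Qed.

Definition In n := (\int[m]_(y in Y) (ln (gbar p f n y))%:E)%E.

Lemma Gint n : m.-integrable Y (EFin \o (fun y => ln (gbar p f n y))).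
Proof. exact: (@bint _ _ m Y _ (Bn f n + Vr f) mY (G_meas n) (@G_bound n)). Qed.

Lemma In_fin n : In n = (fine (In n))%:E.
Proof. by rewrite fineK //; apply: (integrable_fin_num mY); exact: Gint. Qed.

Lemma main_bound e : 0 < e -> exists C, 0 <= C /\ forall n,
  `|fine (In n) - n%:R * Jr| <= C + n%:R * e.
Proof.
move=> e0; have [K [K0 HK]] := K_bound Hsv Hu.
have [N HN] := pointwise Hsv Hu K0 HK e0.
exists (Vr f + N%:R * K); split.
  by apply: addr_ge0; [exact: Vr_ge0|apply: mulr_ge0].
move=> n; set D := Vr f + N%:R * K + n%:R * e.
have Gi := Gint n.
have [M HM] := Sn_bound n.
have mS : measurable_fun Y (Sn n) by apply: measurable_funTS; exact: Sn_meas.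
have Si : m.-integrable Y (EFin \o Sn n) by exact: (@bint _ _ m Y _ M mY mS).
suff H : (`|In n - \int[m]_(y in Y) (Sn n y)%:E| <= D%:E)%E.
  by move: H; rewrite In_fin int_Sn -EFinB lee_fin.
rewrite /In -integralB //.
have -> : (\int[m]_(x in Y) ((EFin \o (fun y => ln (gbar p f n y))) \- (EFin \o Sn n)) x =
    \int[m]_(x in Y) (ln (gbar p f n x) - Sn n x)%:E)%E.
  by apply: eq_integral => y _; rewrite /= EFinB.
have mB : measurable_fun Y (fun x => (ln (gbar p f n x) - Sn n x)%:E).
  by apply/measurable_EFinP; apply: measurable_funB => //; exact: G_meas.
apply: le_trans (le_abse_integral _ mY mB) _.
apply: le_trans (_ : (\int[m]_(x in Y) (cst D%:E) x <= _)%E); last first.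
  have HY' : m Y = 1%E := HY.
  rewrite integral_cst //; rewrite le_eqVlt; apply/orP; left; apply/eqP.
  rewrite -[RHS]mule1; congr (_ * _)%E; exact: HY.
apply: ge0_le_integral => //.
- by apply: measurableT_comp => //.
- move=> y Yy; rewrite /= lee_fin.
  have -> : Sn n y = \sum_(i < n) ln (u (shiftn i y)).
    by apply: eq_bigr => i _; rewrite Lp_Y //; exact: Yshift.
  exact: HN.
Qed.


Lemma final_cvg : (fun n : nat => ((n%:R)^-1)%:E * In n)%E @ \oo -->
  (\int[m]_(y in Y) (ln (u y))%:E)%E.
Proof.
rewrite JE; apply: cvg_EFin.
  by apply: nearW => n; rewrite In_fin -EFinM.
have -> : fine \o (fun n : nat => ((n%:R)^-1)%:E * In n)%E =
    (fun n : nat => (n%:R)^-1 * fine (In n)).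
  by apply/funext => n; rewrite /= In_fin -EFinM.
apply/cvgrPdist_le => eps eps0.
set e := eps / 2.
have e0 : 0 < e by rewrite divr_gt0.
have [C [C0 HC]] := main_bound e0.
have Ce0 : 0 <= C / e by rewrite divr_ge0 // ltW.
exists (Num.bound (C / e)).+1 => // n /= Hn.
have n0 : (0 < n)%N by apply: leq_trans Hn.
have npos : (0 : R) < n%:R by rewrite ltr0n.
have Cn : C < e * n%:R.
  rewrite mulrC -ltr_pdivrMr //; apply: lt_le_trans (archi_boundP Ce0) _.
  by rewrite ler_nat; apply: leq_trans Hn.
have E1 : Jr - n%:R^-1 * fine (In n) = (n%:R * Jr - fine (In n)) / n%:R.
  by field; rewrite gt_eqF.
rewrite E1 normrM normfV (ger0_norm (ltW npos)) ler_pdivrMr // distrC.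
have := HC n.
have -> : eps * n%:R = 2 * (e * n%:R) by rewrite /e; field.
lra.
Qed.

End M6.


Theorem proposition6p2 (R : realType) (k l : nat) (p : 'I_k.+1 -> 'I_l.+1)
  (f : seqsp k -> R) (w : seqsp k) (u : seqsp l -> R)
  (m : probability (Yspace l) R) :
  cont_shift f ->
  summable_variation f ->
  (* u is the uniform limit on Y of u_{w,n} *)
  (forall e : R, 0 < e -> exists N : nat, forall n : nat, (N <= n)%N ->
     forall y : seqsp l, Yset p y -> `|ufun p f w n y - u y| < e) ->
  (* m is a shift-invariant Borel probability measure on Y *)
  m (Yset p : set (Yspace l)) = 1%E ->
  (forall A : set (Yspace l), measurable A ->
     m (shiftn 1 @^-1` A) = m A) ->
  (fun n : nat => ((n%:R)^-1)%:E *
      \int[m]_(y in (Yset p : set (Yspace l))) (ln (gbar p f n y))%:E)%E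
    @ \oo --> (\int[m]_(y in (Yset p : set (Yspace l))) (ln (u y))%:E)%E.
Proof.
move=> _ Hsv Hu HY Hinv.
exact: (final_cvg Hsv Hu HY Hinv).
Qed.
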